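(* There is no final $F$-coalgebra in $\mathbf{Met_3}^{L}$.
   Context: A tripointed metric space is a set with three distinct points $T,L,R$ and a metric bounded by $1$ in which $T,L,R$ have pairwise distance $1$. $\mathbf{Met_3}^{L}$: tripointed metric spaces with Lipschitz maps preserving $T,L,R$. Let $M=\{a,b,c\}$. For a tripointed metric space $X$, $M\times X$ has metric $d((m,x),(n,y))=\tfrac12d(x,y)$ if $m=n$ and $1$ otherwise; $M\otimes X$ is the quotient metric space by the equivalence relation generated by $(b,T)\sim(a,L)$, $(a,R)\sim(c,T)$, $(c,L)\sim(b,R)$, with elements $m\otimes x$ and distinguished points $a\otimes T,b\otimes L,c\otimes R$; $F=M\otimes-$ with $(M\otimes f)(m\otimes x)=m\otimes f(x)$. A coalgebra is $(X,e\colon X\to FX)$ with $e$ a morphism; a coalgebra morphism $h\colon(A,\alpha)\to(B,\beta)$ satisfies $\beta\circ h=Fh\circ\alpha$; a coalgebra is final if every coalgebra has a unique coalgebra morphism into it. *)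

(* Defs.v *)
From Stdlib Require Import Rdefinitions Relations.
From HB Require Import structures.
From mathcomp Require Import all_boot all_order all_algebra.
From mathcomp Require Import boolp classical_sets reals Rstruct.
Set Implicit Arguments. Unset Strict Implicit. Unset Printing Implicit Defensive.
Import Order.TTheory GRing.Theory Num.Theory.
Local Open Scope ring_scope.
Local Open Scope classical_set_scope.

Notation R := Rdefinitions.R.

Record tmet := TMet {
  carrier :> Type;
  dist : carrier -> carrier -> R;
  pT : carrier; pL : carrier; pR : carrier;
  dist_ge0 : forall x y, 0 <= dist x y;
  dist_eq0 : forall x y, dist x y = 0 <-> x = y;
  dist_sym : forall x y, dist x y = dist y x;
  dist_tri : forall x y z, dist x z <= dist x y + dist y z;
  dist_le1 : forall x y, dist x y <= 1;
  dist_TL : dist pT pL = 1;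
  dist_LR : dist pL pR = 1;
  dist_TR : dist pT pR = 1;
  pts_distinct : pT <> pL /\ pL <> pR /\ pT <> pR }.

Definition lipschitz (X Y : Type) (dX : X -> X -> R) (dY : Y -> Y -> R) (f : X -> Y) :=
  exists K : R, 0 <= K /\ forall x y, dY (f x) (f y) <= K * dX x y.

Definition is_mor (X Y : tmet) (f : X -> Y) : Prop :=
  lipschitz (@dist X) (@dist Y) f /\
  f (pT X) = pT Y /\ f (pL X) = pL Y /\ f (pR X) = pR Y.

Inductive M := Ma | Mb | Mc.
Definition eqM (m n : M) : bool :=
  match m, n with Ma, Ma | Mb, Mb | Mc, Mc => true | _, _ => false end.

Definition dprod (X : tmet) (p q : M * X) : R :=
  if eqM p.1 q.1 then dist p.2 q.2 / 2 else 1.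

Definition glue_gen (X : tmet) (p q : M * X) : Prop :=
  (p = (Mb, pT X) /\ q = (Ma, pL X)) \/
  (p = (Ma, pR X) /\ q = (Mc, pT X)) \/
  (p = (Mc, pL X) /\ q = (Mb, pR X)).

(* the equivalence relation generated; elements of M (x) X are its classes,
   represented here by elements of M * X; m (x) x is the class of (m, x). *)
Definition glue (X : tmet) : M * X -> M * X -> Prop :=
  clos_refl_sym_trans _ (@glue_gen X).

Fixpoint chain (X : tmet) (p : M * X) (l : list ((M * X) * (M * X))) (q : M * X) : Prop :=
  match l with
  | nil => glue p q
  | (x, y) :: l' => glue p x /\ chain y l' q
  end.

Fixpoint chain_cost (X : tmet) (l : list ((M * X) * (M * X))) : R :=
  match l with
  | nil => 0
  | (x, y) :: l' => dprod x y + chain_cost l'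
  end.

(* The quotient metric on M (x) X (evaluated on representatives). *)
Definition dtens (X : tmet) (p q : M * X) : R :=
  inf [set c : R | exists l, chain p l q /\ c = chain_cost l].

Definition Fmap (X Y : tmet) (f : X -> Y) (p : M * X) : M * Y := (p.1, f p.2).

(* e : X -> F X is a morphism of Met_3^L (distinguished points of F X are
   a(x)T, b(x)L, c(x)R); e is given by representatives in M * X. *)
Definition is_Fmor (X : tmet) (e : X -> M * X) : Prop :=
  lipschitz (@dist X) (@dtens X) e /\
  glue (e (pT X)) (Ma, pT X) /\ glue (e (pL X)) (Mb, pL X) /\
  glue (e (pR X)) (Mc, pR X).

Record coalg := Coalg {
  cobj : tmet;
  cstr : cobj -> M * cobj;
  cstr_mor : is_Fmor cstr }.

(* coalgebra morphisms: beta o h = F h o alpha (equality in F B) *)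
Definition coalg_mor (A B : coalg) (h : cobj A -> cobj B) : Prop :=
  is_mor h /\ forall x, glue (@cstr B (h x)) (Fmap h (@cstr A x)).

Definition final (Z : coalg) : Prop :=
  forall A : coalg, exists h : cobj A -> cobj Z,
    coalg_mor (A:=A) (B:=Z) h /\ forall h', coalg_mor (A:=A) (B:=Z) h' -> forall x, h' x = h x.

(* Main.v *)
From Stdlib Require Import Rdefinitions Relations.
From HB Require Import structures.
From mathcomp Require Import all_boot all_order all_algebra.
From mathcomp Require Import boolp classical_sets reals Rstruct.
From mathcomp Require Import ring lra.
Require Import Defs.
Set Implicit Arguments. Unset Strict Implicit. Unset Printing Implicit Defensive.
Import Order.TTheory GRing.Theory Num.Theory.
Local Open Scope ring_scope.
Local Open Scope classical_set_scope.

Lemma cc_nil (X : tmet) : chain_cost (X:=X) [::] = 0.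
Proof. by []. Qed.
Lemma cc_cons (X : tmet) x y l : chain_cost (X:=X) ((x, y) :: l) = dprod x y + chain_cost l.
Proof. by []. Qed.

Lemma glue_f (X : tmet) (f : M * X -> R)
  (fglue : forall p q, glue_gen p q -> f p = f q) p q : glue p q -> f p = f q.
Proof.
elim=> [x y /fglue //| x // | x y _ -> // | x y z _ -> _ -> //].
Qed.

Lemma dprod_ge0 (X : tmet) (p q : M * X) : 0 <= dprod p q.
Proof.
rewrite /dprod; case: eqM => //.
by apply: divr_ge0 => //; apply: dist_ge0.
Qed.

Lemma chain_cost_ge0 (X : tmet) (l : list ((M * X) * (M * X))) : 0 <= chain_cost l.
Proof.
elim: l => [|[x y] l IH]; first by rewrite cc_nil.
rewrite cc_cons; exact: addr_ge0 (dprod_ge0 _ _) IH.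
Qed.

Lemma chain_f (X : tmet) (f : M * X -> R)
  (fglue : forall p q, glue_gen p q -> f p = f q)
  (flip : forall p q, f p - f q <= dprod p q)
  (l : list ((M * X) * (M * X))) : forall p q : M * X, chain p l q -> f p - f q <= chain_cost l.
Proof.
elim: l => [|[x y] l IH] p q /=.
  by move/(glue_f fglue) => ->; rewrite subrr.
case=> /(glue_f fglue) -> /IH H.
have -> : f x - f q = (f x - f y) + (f y - f q) by rewrite addrA subrK.
exact: lerD (flip x y) H.
Qed.

Lemma dtens_lb (X : tmet) (f : M * X -> R)
  (fglue : forall p q, glue_gen p q -> f p = f q)
  (flip : forall p q, f p - f q <= dprod p q)
  (p q : M * X) : f p - f q <= dtens p q.
Proof.
rewrite /dtens; apply: lb_le_inf.
  exists (dprod p q); exists [:: (p, q)]; split.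
    by split; exact: rst_refl.
  by rewrite cc_cons cc_nil addr0.
by move=> c [l [H ->]]; exact: (chain_f fglue flip).
Qed.

Lemma dtens_ub (X : tmet) (p q : M * X) : dtens p q <= dprod p q.
Proof.
rewrite /dtens; apply: ge_inf.
  exists 0 => c [l [_ ->]]; exact: chain_cost_ge0.
exists [:: (p, q)]; split.
  by split; exact: rst_refl.
by rewrite cc_cons cc_nil addr0.
Qed.

Definition fa (X : tmet) (p : M * X) :=
  match p.1 with Ma => dist p.2 (pT X) / 2 | _ => 1 / 2 end.

Lemma key (X : tmet) (p q : M * X) (v : X) :
  glue p (Ma, v) -> glue q (Ma, pT X) -> dist v (pT X) / 2 <= dtens p q.
Proof.
have fg : forall p q : M * X, glue_gen p q -> fa p = fa q.
  move=> p1 q1 [[-> ->]|[[-> ->]|[-> ->]]]; rewrite /fa //=.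
  - by rewrite dist_sym dist_TL.
  - by rewrite dist_sym dist_TR.
have fl : forall p q : M * X, fa p - fa q <= dprod p q.
  move=> [m x] [n y]; rewrite /fa /dprod /=.
  have h1 := dist_le1 x (pT X); have h2 := dist_le1 y (pT X).
  have h3 := dist_ge0 x (pT X); have h4 := dist_ge0 y (pT X).
  have h5 := dist_tri x y (pT X); have h6 := dist_ge0 x y.
  case: m; case: n => /=; lra.
move=> /(glue_f fg) E1 /(glue_f fg) E2.
have := dtens_lb fg fl p q.
rewrite E1 E2 /fa /=.
have -> : dist (pT X) (pT X) = 0 by apply/dist_eq0.
lra.
Qed.

Inductive P := PT | PR | PX of nat.

Definition Peqb (p q : P) : bool :=
  match p, q with
  | PT, PT => true | PR, PR => true | PX n, PX m => n == m | _, _ => false end.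

Lemma PeqbP p q : reflect (p = q) (Peqb p q).
Proof.
case: p; case: q => /=; try by constructor.
move=> m n; apply: (iffP eqP) => [-> //|[] //].
Qed.

Definition wA (r : R) (p : P) :=
  match p with PX n => r ^+ n | PT => 0 | PR => 1 end.

Definition dA (r : R) (p q : P) :=
  if ~~ Peqb p q then Num.max (wA r p) (wA r q) else 0.

Lemma wA_ge0 r p : 0 < r -> 0 <= wA r p.
Proof. by move=> hr; case: p => //= n; apply: exprn_ge0; apply: ltW. Qed.

Lemma wA_le1 r p : 0 < r -> r <= 1 -> wA r p <= 1.
Proof. by move=> hr hr1; case: p => //= n; apply: exprn_ile1 => //; apply: ltW. Qed.

Lemma wA_gt0 r p : 0 < r -> p <> PT -> 0 < wA r p.
Proof. by move=> hr; case: p => //= n _; apply: exprn_gt0. Qed.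

Lemma dA_ge0 r p q : 0 < r -> 0 <= dA r p q.
Proof.
move=> hr; rewrite /dA; case: ifP => // _.
by rewrite le_max wA_ge0.
Qed.

Lemma dA_eq0 r p q : 0 < r -> dA r p q = 0 <-> p = q.
Proof.
move=> hr; rewrite /dA; split.
  case: (PeqbP p q) => //= Hne Hm.
  have h1 : wA r p <= 0 by rewrite -Hm le_max lexx.
  have h2 : wA r q <= 0 by rewrite -Hm le_max lexx orbT.
  have ep : p = PT.
    by move: h1; case: p {Hne Hm} => //= [|n]; rewrite ?ler10 // leNgt exprn_gt0.
  have eq : q = PT.
    by move: h2; case: q {Hne Hm} => //= [|n]; rewrite ?ler10 // leNgt exprn_gt0.
  by case: Hne; rewrite ep eq.
by move=> ->; case: (PeqbP q q).
Qed.

Lemma Peqb_sym p q : Peqb p q = Peqb q p.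
Proof. by case: p; case: q => //= n m; rewrite eq_sym. Qed.

Lemma dA_sym r p q : dA r p q = dA r q p.
Proof. by rewrite /dA Peqb_sym maxC. Qed.

Lemma dA_le1 r p q : 0 < r -> r <= 1 -> dA r p q <= 1.
Proof.
move=> hr hr1; rewrite /dA; case: ifP => // _.
by rewrite ge_max !wA_le1.
Qed.

Lemma dA_tri r x y z : 0 < r -> dA r x z <= dA r x y + dA r y z.
Proof.
move=> hr.
case: (PeqbP x z) => [->|Hxz].
  by rewrite /dA; case: (PeqbP z z) => // _ /=; apply: addr_ge0; apply: dA_ge0.
case: (PeqbP x y) => [->|Hxy].
  by rewrite {2}/dA; case: (PeqbP y y) => // _ /=; rewrite add0r.
case: (PeqbP y z) => [->|Hyz].
  by rewrite {3}/dA; case: (PeqbP z z) => // _ /=; rewrite addr0.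
rewrite /dA.
case: (PeqbP x z) => // _; case: (PeqbP x y) => // _; case: (PeqbP y z) => // _ /=.
rewrite ge_max; apply/andP; split.
  apply: le_trans (_ : Num.max (wA r x) (wA r y) <= _); first by rewrite le_max lexx.
  by rewrite lerDl le_max wA_ge0.
apply: le_trans (_ : Num.max (wA r y) (wA r z) <= _); first by rewrite le_max lexx orbT.
by rewrite lerDr le_max wA_ge0.
Qed.

Definition Amet (r : R) (hr : 0 < r) (hr1 : r <= 1) : tmet.
Proof.
refine (@TMet P (dA r) PT (PX 0) PR
  (fun x y => dA_ge0 x y hr) (fun x y => dA_eq0 x y hr) (dA_sym r)
  (fun x y z => dA_tri x y z hr) (fun x y => dA_le1 x y hr hr1) _ _ _ _).
- by rewrite /dA /= max_r // ler01.
- by rewrite /dA /= maxxx.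
- by rewrite /dA /= max_r // ler01.
- by split; [|split].
Defined.

Definition eA (p : P) : M * P :=
  match p with
  | PT => (Ma, PT) | PR => (Mc, PR) | PX 0 => (Mb, PX 0) | PX n.+1 => (Ma, PX n) end.

Lemma dA_TX r n : 0 < r -> dA r PT (PX n) = r ^+ n.
Proof. by move=> hr; rewrite /dA /= max_r // exprn_ge0 // ltW. Qed.

Lemma dA_XS r n m : 0 < r -> dA r (PX n.+1) (PX m.+1) = r * dA r (PX n) (PX m).
Proof.
move=> hr; rewrite /dA /= eqSS; case: (n == m) => /=; first by rewrite mulr0.
by rewrite maxr_pMr ?ltW // !exprS.
Qed.

Lemma dA_one r p q : 0 < r -> r <= 1 -> ~~ Peqb p q -> (wA r p = 1 \/ wA r q = 1) ->
  dA r p q = 1.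
Proof.
move=> hr hr1 hne hw; rewrite /dA hne; apply/eqP; rewrite eq_le ge_max !wA_le1 //=.
by rewrite le_max; case: hw => ->; rewrite lexx ?orbT.
Qed.

Lemma dA_TS r n : 0 < r -> dA r PT (PX n.+1) = r * dA r PT (PX n).
Proof. by move=> hr; rewrite !dA_TX // exprS. Qed.

Lemma eA_lip r (hr : 0 < r) (hr1 : r <= 1) (p q : P) :
  dprod (X := Amet hr hr1) (eA p) (eA q) <= r^-1 * dA r p q.
Proof.
have hi : 1 <= r^-1 by rewrite invf_ge1.
have hK : forall X, 0 <= X -> X / 2 <= r^-1 * (r * X).
  by move=> X hX; rewrite mulrA mulVf ?mul1r ?gt_eqF //; lra.
have hd : forall a b : P, 0 <= dA r a b := fun a b => dA_ge0 a b hr.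
have hone : forall p q, ~~ Peqb p q -> (wA r p = 1 \/ wA r q = 1) -> 1 <= r^-1 * dA r p q.
  by move=> p0 q0 h h'; rewrite dA_one // mulr1.
have hsame : forall p, dA r p p / 2 <= r^-1 * dA r p p.
  move=> p0; have -> : dA r p0 p0 = 0 by apply/dA_eq0.
  by rewrite mul0r mulr0.
rewrite /dprod.
case: p => [||[|n]]; case: q => [||[|m]]; rewrite /=.
all: try (by apply: hone => //=; first [by left | by right]).
all: try (by apply: hsame).
all: rewrite ?[dA r (PX _) PT]dA_sym ?dA_XS ?dA_TS //; apply: hK; apply: hd.
Qed.

Lemma eA_mor r (hr : 0 < r) (hr1 : r <= 1) : is_Fmor (X := Amet hr hr1) eA.
Proof.
split.
  exists r^-1; split; first by rewrite invr_ge0 ltW.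
  move=> x y; apply: le_trans (dtens_ub _ _) _; exact: eA_lip.
by split; [|split]; apply: rst_refl.
Qed.

Definition Acoal r (hr : 0 < r) (hr1 : r <= 1) : coalg := Coalg (eA_mor hr hr1).

Theorem mainTheorem12 : ~ (exists Z : coalg, final Z).
Proof.
move=> [Z fin].
have [[KZ [KZ0 HKZ]] [hT _]] := cstr_mor Z.
pose r : R := (4 * (KZ + 1))^-1.
have e : r * (4 * (KZ + 1)) = 1 by rewrite mulVf //; lra.
have hr : 0 < r by rewrite /r invr_gt0; lra.
have hr1 : r <= 1.
  rewrite /r invf_le1; lra.
clearbody r.
have [h [[hmor hco] _]] := fin (Acoal hr hr1).
move: hmor => [[Kh [Kh0 HKh]] [hhT [hhL _]]].
have step : forall n, dist (h (PX n)) (pT (cobj Z)) / 2 <= KZ * dist (h (PX n.+1)) (pT (cobj Z)).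
  move=> n; apply: le_trans (HKZ _ _).
  apply: key.
    exact: (hco (PX n.+1)).
  exact: hT.
have ind : forall n, (1/2) ^+ n <= KZ ^+ n * dist (h (PX n)) (pT (cobj Z)).
  elim=> [|n IH].
    rewrite !expr0 mul1r.
    have -> : h (PX 0) = pL (cobj Z) by exact: hhL.
    by rewrite dist_sym dist_TL.
  have hb : 0 <= KZ ^+ n by apply: exprn_ge0.
  have := ler_wpM2l hb (step n).
  rewrite !exprS; set a := (1/2) ^+ n; set b := KZ ^+ n; move: IH; rewrite -/a -/b.
  set d0 := dist _ _; set d1 := dist _ _; nra.
have hKr : KZ * r <= 1/4.
  have e' : 4 * (KZ * r) + 4 * r = r * (4 * (KZ + 1)) by ring.
  rewrite e in e'.
  lra.
have bnd : forall n, 2 ^+ n <= Kh.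
  move=> n.
  have hl : dist (h (PX n)) (pT (cobj Z)) <= Kh * r ^+ n.
    rewrite -hhT; apply: le_trans (HKh _ _) _.
    by rewrite /= dA_sym dA_TX.
  have h4 : (KZ * r) ^+ n <= (1/4) ^+ n.
    by apply: lerXn2r => //; rewrite nnegrE; [apply: mulr_ge0 => //; apply: ltW | lra].
  have hp : 0 < (KZ * 0 + 1/4) ^+ n by apply: exprn_gt0; lra.
  rewrite mulr0 add0r in hp.
  have hb : 0 <= KZ ^+ n by apply: exprn_ge0.
  have := ler_wpM2l hb hl.
  have e2 : (KZ * 0 + 1/2) ^+ n = 2 ^+ n * (1/4) ^+ n.
    by rewrite -exprMn; congr (_ ^+ _); lra.
  rewrite mulr0 add0r in e2.
  have e3 : KZ ^+ n * (Kh * r ^+ n) = Kh * (KZ * r) ^+ n.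
    by rewrite exprMn mulrCA.
  rewrite e3 => H1; have H0 := ind n; rewrite e2 in H0.
  have H2 := ler_wpM2l Kh0 h4.
  have : 2 ^+ n * (1/4) ^+ n <= Kh * (1/4) ^+ n.
    apply: le_trans H0 _; apply: le_trans H1 H2.
  by rewrite ler_pM2r.
have hn := archi_boundP Kh0.
move: (Num.bound Kh) hn => n hn.
have hb := bnd n; rewrite -natrX in hb.
have h2 : (n < 2 ^ n)%N by apply: ltn_expl.
rewrite -(ltr_nat R) in h2.
have := lt_le_trans (lt_trans hn h2) hb.
by rewrite ltxx.
Qed.
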